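(* Let $\phi=\langle X,Q,D,C\rangle$ be a QCSP, let $x_i\in X$ be an existential variable ($Q_{x_i}=\exists$), and let $a\in D_{x_i}$ be such that $\textsl{s-fixable}^\phi(x_i,a)$ holds. Let $\phi'=\langle X,Q,D',C\rangle$ where $D'_{x_i}=\{a\}$ and $D'_{x_j}=D_{x_j}$ for all $j\ne i$. Then $\phi$ is true iff $\phi'$ is true.
   Context: Fix a finite set $\mathbb{D}$. For a finite set $V$ of variables, a $V$-tuple is a map $t:V\to\mathbb{D}$, written $x\mapsto t_x$; a $V$-relation is a set of $V$-tuples. A QCSP is a tuple $\phi=\langle X,Q,D,C\rangle$ where $X=\{x_1,\dots,x_n\}$ is a finite set of variables linearly ordered by index, $Q$ assigns to each $x_i$ a quantifier $Q_{x_i}\in\{\forall,\exists\}$, $D$ assigns to each $x_i$ a domain $D_{x_i}\subseteq\mathbb{D}$, and $C$ is a finite set of constraints, each being a $V$-relation for some $V\subseteq X$. For $V\subseteq X$, $\prod_{x\in V}D_x$ denotes the set of $V$-tuples $t$ with $t_x\in D_x$ for all $x\in V$; for $U\subseteq V$ and a $V$-tuple $t$, $t|_U$ is its restriction to $U$. Let $E=\{x_i:Q_{x_i}=\exists\}$, $A=\{x_i:Q_{x_i}=\forall\}$, $X_j=\{x_i:i\le j\}$ (so $X_0=\emptyset$), $A_j=A\cap X_j$. The set of solutions $\mathrm{sol}^\phi$ is the set of $t\in\prod_{x\in X}D_x$ such that $t|_V\in c$ for every $V$-relation $c\in C$. The QCSP $\phi$ is true if the sentence $Q_{x_1}x_1\in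 D_{x_1}\cdots Q_{x_n}x_n\in D_{x_n}.\ \bigwedge_{c\in C}c(\ldots)$ holds, with bounded quantifiers ranging over the listed domains and each constraint atom for a $V$-relation $c$ holding under assignment $t$ iff $t|_V\in c$. A strategy is a family $s=(s_{x_i})_{x_i\in E}$ of functions $s_{x_i}:\prod_{y\in A_{i-1}}D_y\to D_{x_i}$; its scenarios $\mathrm{sce}^\phi(s)$ are the $t\in\prod_{x\in X}D_x$ with $t_{x_i}=s_{x_i}(t|_{A_{i-1}})$ for every $x_i\in E$; $s$ is winning if $\mathrm{sce}^\phi(s)\subseteq\mathrm{sol}^\phi$; the set of outcomes is $\mathrm{out}^\phi=\bigcup_{s\text{ winning}}\mathrm{sce}^\phi(s)$. Shallow fixability: $\textsl{s-fixable}^\phi(x_i,a)$ iff $\forall t\in\mathrm{out}^\phi.\ \exists t'\in\mathrm{out}^\phi.\ t|_{X_{i-1}}=t'|_{X_{i-1}}\wedge t'_{x_i}=a$. *)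

(* Defs.v *)
From mathcomp Require Import all_boot.
Set Implicit Arguments. Unset Strict Implicit. Unset Printing Implicit Defensive.

(* Variables x_1..x_n are encoded as 'I_n (x_{i+1} ~ ordinal i), ordered by index.
   Partial tuples (V-tuples) are encoded as {ffun 'I_n -> option D}, with value
   None exactly outside V. A constraint is a pair (V, c) with c a V-relation. *)
Record qcsp (D : finType) (n : nat) := QCSP {
  qex : 'I_n -> bool;                (* true = existential, false = universal *)
  qdom : 'I_n -> {set D};
  qcons : seq ({set 'I_n} * {set {ffun 'I_n -> option D}})
}.

Section QCSPDefs.
Variables (D : finType) (n : nat).
Implicit Types (phi : qcsp D n).

Definition restrp (V : {set 'I_n}) (t : 'I_n -> option D) : {ffun 'I_n -> option D} :=
  [ffun x => if x \in V then t x else None].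
Definition restr (V : {set 'I_n}) (t : {ffun 'I_n -> D}) : {ffun 'I_n -> option D} :=
  restrp V (fun x => Some (t x)).

Definition in_prod phi (t : {ffun 'I_n -> D}) : Prop := forall x, t x \in qdom phi x.

Definition sat_constraints phi (t : 'I_n -> option D) : Prop :=
  forall Vc, Vc \in qcons phi -> restrp Vc.1 t \in Vc.2.

Definition is_sol phi (t : {ffun 'I_n -> D}) : Prop :=
  in_prod phi t /\ sat_constraints phi (fun x => Some (t x)).

Definition upd (t : 'I_n -> option D) (x : 'I_n) (a : D) : 'I_n -> option D :=
  fun y => if y == x then Some a else t y.

Fixpoint qeval phi (s : seq 'I_n) (t : 'I_n -> option D) : Prop :=
  match s with
  | [::] => sat_constraints phi t
  | x :: s' =>
      if qex phi x then exists2 a, a \in qdom phi x & qeval phi s' (upd t x a)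
      else forall a, a \in qdom phi x -> qeval phi s' (upd t x a)
  end.

(* enum 'I_n lists the variables in increasing index order *)
Definition qtrue phi : Prop := qeval phi (enum 'I_n) (fun _ => None).

Definition Aprev phi (x : 'I_n) : {set 'I_n} :=
  [set y : 'I_n | (y < x)%N && ~~ qex phi y].

Definition in_prodV phi (V : {set 'I_n}) (u : {ffun 'I_n -> option D}) : Prop :=
  forall y, if y \in V then exists2 d, u y = Some d & d \in qdom phi y
            else u y = None.

(* strategy: for each existential x, a function from A_{i-1}-tuples to D_x *)
Definition strategy := 'I_n -> {ffun 'I_n -> option D} -> D.

Definition is_strategy phi (s : strategy) : Prop :=
  forall x, qex phi x -> forall u, in_prodV phi (Aprev phi x) u -> s x u \in qdom phi x.

Definition scenario phi (s : strategy) (t : {ffun 'I_n -> D}) : Prop :=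
  in_prod phi t /\ forall x, qex phi x -> t x = s x (restr (Aprev phi x) t).

Definition winning phi (s : strategy) : Prop :=
  is_strategy phi s /\ forall t, scenario phi s t -> is_sol phi t.

Definition outcome phi (t : {ffun 'I_n -> D}) : Prop :=
  exists2 s, winning phi s & scenario phi s t.

Definition s_fixable phi (x : 'I_n) (a : D) : Prop :=
  forall t, outcome phi t ->
    exists2 t', outcome phi t' &
      (forall y : 'I_n, (y < x)%N -> t y = t' y) /\ t' x = a.

Definition fix_dom phi (x : 'I_n) (a : D) : qcsp D n :=
  QCSP (qex phi) (fun y => if y == x then [set a] else qdom phi y) (qcons phi).

End QCSPDefs.

(* Main.v *)
From Stdlib Require Import FunctionalExtensionality ClassicalEpsilon.
Require Import Defs.
From mathcomp Require Import all_boot.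
Set Implicit Arguments. Unset Strict Implicit. Unset Printing Implicit Defensive.
Section Aux.
Variables (D : finType) (n : nat).

Definition pref (t : 'I_n -> D) (k : nat) : 'I_n -> option D :=
  fun y => if (y < k)%N then Some (t y) else None.
Definition PP (psi : qcsp D n) k (t : 'I_n -> D) :=
  qeval psi (drop k (enum 'I_n)) (pref t k).
Definition tset (t : {ffun 'I_n -> D}) (o : 'I_n) d : {ffun 'I_n -> D} :=
  [ffun z => if z == o then d else t z].

Lemma drop_enum k (Hk : k < n) :
  drop k (enum 'I_n) = Ordinal Hk :: drop k.+1 (enum 'I_n).
Proof.
rewrite (drop_nth (Ordinal Hk)) ?size_enum_ord //; congr (_ :: _).
by apply: val_inj; rewrite /= nth_enum_ord.
Qed.

Lemma drop_enum_n : drop n (enum 'I_n) = [::].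
Proof. by rewrite drop_oversize // size_enum_ord. Qed.

Lemma mem_drop_enum k (y : 'I_n) : y \in drop k (enum 'I_n) -> k <= y.
Proof.
move=> H; have: val y \in map val (drop k (enum 'I_n)) by apply: map_f.
by rewrite map_drop val_enum_ord drop_iota mem_iota add0n => /andP[].
Qed.

Lemma pref_upd (t : {ffun 'I_n -> D}) k (o : 'I_n) d : val o = k ->
  upd (pref t k) o d = pref (tset t o d) k.+1.
Proof.
move=> ok; apply: functional_extensionality => y.
rewrite /upd /pref ffunE ltnS.
case: eqVneq => [->|ne]; first by rewrite -ok leqnn.
rewrite [(y <= k)%N]leq_eqVlt.
have -> : (y == k :> nat) = false.
  by apply/negbTE; apply: contra ne; rewrite -ok => /eqP/val_inj ->.
done.
Qed.

Lemma pref_ext (t t' : 'I_n -> D) k :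
  (forall y : 'I_n, y < k -> t y = t' y) -> pref t k = pref t' k.
Proof.
move=> H; apply: functional_extensionality => y; rewrite /pref.
by case: ifP => // /H ->.
Qed.

Lemma pref_n (t : 'I_n -> D) : pref t n = (fun y => Some (t y)).
Proof. by apply: functional_extensionality => y; rewrite /pref ltn_ord. Qed.

Lemma pref_0 (t : 'I_n -> D) : pref t 0 = (fun _ => None).
Proof. by apply: functional_extensionality => y. Qed.

Lemma restr_ext (V : {set 'I_n}) (t t' : {ffun 'I_n -> D}) :
  (forall z, z \in V -> t z = t' z) -> restr V t = restr V t'.
Proof.
by move=> H; apply/ffunP => z; rewrite !ffunE; case: ifP => // /H ->.
Qed.

Lemma restrp_pref (V : {set 'I_n}) (t : {ffun 'I_n -> D}) k :
  (forall z, z \in V -> z < k) -> restrp V (pref t k) = restr V t.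
Proof.
by move=> H; apply/ffunP => z; rewrite !ffunE /pref; case: ifP => // /H ->.
Qed.

Lemma Aprev_lt (psi : qcsp D n) (y z : 'I_n) : z \in Aprev psi y -> z < y.
Proof. by rewrite inE => /andP[]. Qed.

Lemma in_prodV_restr (psi : qcsp D n) (V : {set 'I_n}) (t : {ffun 'I_n -> D}) :
  in_prod psi t -> in_prodV psi V (restr V t).
Proof.
move=> H y; rewrite ffunE; case: (y \in V) => //; exists (t y) => //; exact: H.
Qed.

Lemma in_prod_tset (psi : qcsp D n) t (o : 'I_n) d :
  in_prod psi t -> d \in qdom psi o -> in_prod psi (tset t o d).
Proof. by move=> H Hd y; rewrite ffunE; case: eqVneq => [->|]. Qed.

Lemma qeval_fix_mono (phi : qcsp D n) x a s t : qex phi x -> a \in qdom phi x ->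
  qeval (fix_dom phi x a) s t -> qeval phi s t.
Proof.
move=> ex ax; elim: s t => [|y s IH] t //=.
case: eqVneq => [->|ne].
  rewrite ex => -[d]; rewrite inE => /eqP -> H; exists a => //; exact: IH.
case: ifP => _.
  by move=> [d Hd H]; exists d => //; exact: IH.
by move=> H d Hd; apply: IH; apply: H.
Qed.

Lemma qeval_fix_eq (phi : qcsp D n) x a s t : x \notin s ->
  qeval (fix_dom phi x a) s t <-> qeval phi s t.
Proof.
elim: s t => [|y s IH] t //=; rewrite in_cons negb_or => /andP[ne ns].
have nyx : (y == x) = false by rewrite eq_sym (negbTE ne).
rewrite nyx.
case: ifP => _; split.
- by move=> [d Hd H]; exists d => //; apply/(IH _ ns).
- by move=> [d Hd H]; exists d => //; apply/(IH _ ns).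
- by move=> H d Hd; apply/(IH _ ns); exact: H.
- by move=> H d Hd; apply/(IH _ ns); exact: H.
Qed.

End Aux.
Section B.
Variables (D : finType) (n : nat).

Lemma neq_lt (z o : 'I_n) : z < o -> (z == o) = false.
Proof. by move=> lt; apply/negbTE; apply: contraTneq lt => ->; rewrite ltnn. Qed.

Lemma cons_tset (psi : qcsp D n) (s : strategy D n) (t : {ffun 'I_n -> D}) k (o : 'I_n) d :
  val o = k ->
  (forall y, qex psi y -> y < k -> t y = s y (restr (Aprev psi y) t)) ->
  (qex psi o -> d = s o (restr (Aprev psi o) t)) ->
  forall y, qex psi y -> y < k.+1 ->
    tset t o d y = s y (restr (Aprev psi y) (tset t o d)).
Proof.
move=> ok Ht Hd y ey; rewrite ltnS leq_eqVlt => /orP[/eqP yk | ylt].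
  have yo : y = o by apply: val_inj; rewrite /= yk ok.
  subst y; rewrite ffunE eqxx (Hd ey); congr (s o _).
  by apply: restr_ext => z /Aprev_lt zo; rewrite ffunE neq_lt.
have yo : y < o by rewrite ok.
rewrite ffunE neq_lt // Ht //; congr (s y _).
apply: restr_ext => z /Aprev_lt zy; rewrite ffunE neq_lt //.
exact: ltn_trans zy yo.
Qed.

Lemma win_P (psi : qcsp D n) (s : strategy D n) : winning psi s ->
  forall m k (t : {ffun 'I_n -> D}), k + m = n -> in_prod psi t ->
  (forall y, qex psi y -> y < k -> t y = s y (restr (Aprev psi y) t)) ->
  PP psi k t.
Proof.
move=> [strat win]; elim=> [|m IH] k t km Ht Hc.
  rewrite addn0 in km; subst k.
  rewrite /PP drop_enum_n /= pref_n.
  have [_ sat] := win t (conj Ht (fun y ey => Hc y ey (ltn_ord y))).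
  exact: sat.
have Hk : k < n by rewrite -km addnS ltnS leq_addr.
rewrite /PP (drop_enum Hk) /=.
set o := Ordinal Hk.
have ok : val o = k by [].
case eo: (qex psi o).
  set d := s o (restr (Aprev psi o) t).
  exists d; first by apply: strat => //; apply: in_prodV_restr.
  rewrite (pref_upd _ _ ok); apply: (IH k.+1); first by rewrite addSnnS.
  - by apply: in_prod_tset => //; apply: strat => //; apply: in_prodV_restr.
  - exact: (cons_tset ok Hc).
move=> d Hd; rewrite (pref_upd _ _ ok); apply: (IH k.+1); first by rewrite addSnnS.
- exact: in_prod_tset.
- by apply: (cons_tset ok Hc); rewrite eo.
Qed.

End B.
Section C.
Variables (D : finType) (n : nat) (psi : qcsp D n) (t0 : {ffun 'I_n -> D}).

Definition choice (o : 'I_n) (t : {ffun 'I_n -> D}) : D :=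
  if excluded_middle_informative (PP psi o.+1 (tset t o (t0 o))) then t0 o
  else match excluded_middle_informative
         (exists d, d \in qdom psi o /\ PP psi o.+1 (tset t o d)) with
       | left H => proj1_sig (constructive_indefinite_description _ H)
       | right _ => t0 o end.

Definition value (w : {ffun 'I_n -> option D}) (o : 'I_n) t :=
  if qex psi o then choice o t else odflt (t0 o) (w o).

Fixpoint build (w : {ffun 'I_n -> option D}) (j : nat) : {ffun 'I_n -> D} :=
  match j with
  | 0 => t0
  | j'.+1 => let b := build w j' in
      match insub j' with Some o => tset b o (value w o b) | None => b end
  end.

Definition strat : strategy D n := fun y w => value w y (build w y).

Lemma tset_id (t : {ffun 'I_n -> D}) o : tset t o (t o) = t.
Proof. by apply/ffunP => z; rewrite ffunE; case: eqVneq => [->|]. Qed.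

Lemma build_step w (o : 'I_n) :
  build w o.+1 = tset (build w o) o (value w o (build w o)).
Proof. by rewrite /= valK. Qed.

Lemma build_ge w j (y : 'I_n) : j <= y -> build w j y = t0 y.
Proof.
elim: j => [|j IH] //= jy.
case: insubP => [o _ oj|_]; last by apply: IH; exact: ltnW.
rewrite ffunE; case: eqVneq => [yo|_]; last by apply: IH; exact: ltnW.
by move: jy; rewrite yo oj ltnn.
Qed.

Lemma build_lt w j m (y : 'I_n) : y < j -> build w j y = build w (j + m) y.
Proof.
move=> yj; elim: m => [|m IH]; first by rewrite addn0.
rewrite addnS /=; case: insubP => [o _ oj|_] //.
rewrite ffunE; case: eqVneq => [yo|_] //.
by move: yj; rewrite yo oj ltnNge leq_addr.
Qed.

Lemma build_ext (w w' : {ffun 'I_n -> option D}) j :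
  (forall y : 'I_n, ~~ qex psi y -> y < j -> w y = w' y) -> build w j = build w' j.
Proof.
elim: j => [|j IH] //= H.
rewrite IH; last by move=> y ey yj; apply: H => //; exact: ltnW.
case: insubP => [o _ oj|_] //.
rewrite /value; case eo: (qex psi o) => //.
by rewrite H ?eo // oj.
Qed.

Hypothesis t0P : in_prod psi t0.

Lemma choice_dom o t : choice o t \in qdom psi o.
Proof.
rewrite /choice; destruct (excluded_middle_informative _) as [p0|np0]; first exact: t0P.
destruct (excluded_middle_informative _) as [H|np1]; last exact: t0P.
by case: (constructive_indefinite_description _ H) => d [].
Qed.

Lemma choice_good o t : (exists d, d \in qdom psi o /\ PP psi o.+1 (tset t o d)) ->
  PP psi o.+1 (tset t o (choice o t)).
Proof.
move=> Hex; rewrite /choice; destruct (excluded_middle_informative _) as [p|np]; first by [].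
destruct (excluded_middle_informative _) as [H|nH]; last by [].
by case: (constructive_indefinite_description _ H) => d [].
Qed.

Lemma PP_tset_ext (t t' : {ffun 'I_n -> D}) (o : 'I_n) d :
  (forall y : 'I_n, y < o -> t y = t' y) ->
  PP psi o.+1 (tset t o d) -> PP psi o.+1 (tset t' o d).
Proof.
move=> H; rewrite /PP (@pref_ext _ _ (tset t o d) (tset t' o d)) //.
move=> y; rewrite ltnS leq_eqVlt !ffunE => /orP[/eqP yo|yo].
  have -> : y = o by apply: val_inj.
  by rewrite eqxx.
by rewrite neq_lt // H.
Qed.

Lemma strat_is : is_strategy psi strat.
Proof. by move=> y ey w _; rewrite /strat /value ey choice_dom. Qed.

Lemma scen_build t : scenario psi strat t -> forall j (w : {ffun 'I_n -> option D}),
  (forall y : 'I_n, ~~ qex psi y -> y < j -> w y = Some (t y)) ->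
  forall y : 'I_n, y < j -> build w j y = t y.
Proof.
move=> [Ht Hs]; elim=> [|j IH] w Hw y //=.
case: insubP => [o _ oj|jn _]; last first.
  apply: IH; first by move=> z ez zj; apply: Hw => //; exact: ltnW.
  by rewrite -leqNgt in jn; exact: leq_trans (ltn_ord y) jn.
move=> yj; rewrite ffunE; case: eqVneq => [->|yo].
  rewrite -oj /value; case eo: (qex psi o).
    rewrite [RHS](Hs o eo) /strat /value eo; congr (choice o _).
    apply: build_ext => z ez zo; rewrite ffunE Hw //; last by rewrite -oj ltnW.
    by rewrite inE zo ez.
  by rewrite Hw ?eo // oj.
have yo' : (y == j :> nat) = false.
  by apply/negbTE; apply: contra yo; rewrite -oj => /eqP/val_inj ->.
move: yj; rewrite ltnS leq_eqVlt yo' /= => yj.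
apply: IH => // z ez zj; apply: Hw => //; exact: ltnW.
Qed.

Lemma strat_win : qtrue psi -> winning psi strat.
Proof.
move=> Htrue; split; first exact: strat_is.
move=> t Hsc; have [Ht Hs] := Hsc.
suff: forall k, k <= n -> PP psi k t.
  move/(_ n (leqnn n)); rewrite /PP drop_enum_n /= pref_n => sat; by split.
elim=> [|k IH] Hk; first by rewrite /PP drop0 pref_0.
have Hk' : k < n by [].
move: (IH (ltnW Hk')); rewrite /PP (drop_enum Hk') /=.
set o := Ordinal Hk'; have ok : val o = k by [].
case eo: (qex psi o).
  move=> [d Hd]; rewrite (pref_upd _ _ ok) => H.
  set T := build (restr (Aprev psi o) t) o.
  have TT : forall y : 'I_n, y < o -> T y = t y.
    apply: scen_build => // z ez zo; rewrite ffunE inE zo ez //.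
  have : PP psi o.+1 (tset T o (choice o T)).
    apply: choice_good; exists d; split => //.
    by apply: PP_tset_ext H => y /TT ->.
  move/(PP_tset_ext (t' := t)) => /(_ TT).
  have <- : t o = choice o T by rewrite (Hs o eo) /strat /value eo.
  by rewrite tset_id.
move/(_ (t o) (Ht o)); rewrite (pref_upd _ _ ok) tset_id //.
Qed.

Definition w0 : {ffun 'I_n -> option D} := [ffun y => Some (t0 y)].
Definition tt := build w0 n.

Lemma tt_val (y : 'I_n) : tt y = value w0 y (build w0 y).
Proof.
have := build_lt w0 (n - y.+1) (ltnSn y); rewrite subnKC // /tt => <-.
by rewrite build_step ffunE eqxx.
Qed.

Lemma tt_univ (y : 'I_n) : ~~ qex psi y -> tt y = t0 y.
Proof. by move=> ey; rewrite tt_val /value (negbTE ey) ffunE. Qed.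

Lemma tt_scen : scenario psi strat tt.
Proof.
split.
  move=> y; rewrite tt_val /value; case: ifP => _; first exact: choice_dom.
  rewrite ffunE; exact: t0P.
move=> y ey; rewrite tt_val /strat /value ey; congr (choice y _).
apply: build_ext => z ez zy; rewrite !ffunE inE zy ez /= tt_univ //.
Qed.

Lemma tt_pref k : k <= n -> (forall j, j <= k -> PP psi j t0) ->
  forall y : 'I_n, y < k -> tt y = t0 y.
Proof.
move=> kn G.
have Hb : forall j, j <= k -> build w0 j = t0.
  elim=> [|j IH] // jk /=; rewrite IH; last exact: ltnW.
  case: insubP => [o _ oj|_] //.
  rewrite /value; case: ifP => _; last by rewrite ffunE /= tset_id.
  rewrite /choice; destruct (excluded_middle_informative _) as [p|nP]; first by rewrite tset_id.
  by exfalso; apply: nP; rewrite tset_id oj; exact: (G j.+1 jk).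
move=> y yk; have := build_lt w0 (n - k) yk; rewrite subnKC // /tt => <-.
by rewrite Hb.
Qed.

Lemma construct k : qtrue psi -> k <= n -> (forall j, j <= k -> PP psi j t0) ->
  exists2 t, outcome psi t & forall y : 'I_n, y < k -> t y = t0 y.
Proof.
move=> Htrue kn G; exists tt; last exact: tt_pref.
exists strat; [exact: strat_win | exact: tt_scen].
Qed.

End C.
Section Main.
Variables (D : finType) (n : nat) (phi : qcsp D n) (x : 'I_n) (a : D).
Hypotheses (ex : qex phi x) (ax : a \in qdom phi x) (fx : s_fixable phi x a).

Lemma drop_enum_o (o : 'I_n) : drop o (enum 'I_n) = o :: drop o.+1 (enum 'I_n).
Proof. by rewrite (drop_enum (ltn_ord o)); congr (_ :: _); apply: val_inj. Qed.

Lemma PP_eq (psi : qcsp D n) j (t t' : 'I_n -> D) :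
  (forall y : 'I_n, y < j -> t y = t' y) -> PP psi j t -> PP psi j t'.
Proof. by move=> H; rewrite /PP (pref_ext H). Qed.

Lemma main_k (Htrue : qtrue phi) : forall m k (t : {ffun 'I_n -> D}), k + m = x ->
  in_prod phi t -> (forall j, j <= k -> PP phi j t) -> PP (fix_dom phi x a) k t.
Proof.
elim=> [|m IH] k t km Ht G.
  rewrite addn0 in km; subst k.
  have [t1 [s1 w1 sc1] agr1] := construct Ht Htrue (ltnW (ltn_ord x)) G.
  have [t' [s' w' sc'] [agr' t'x]] := fx (ex_intro2 _ _ s1 w1 sc1).
  have P' : PP phi x.+1 t'.
    apply: (win_P w' (m := n - x.+1)); first by rewrite subnKC.
      by case: sc'.
    by move=> y ey _; case: sc' => _ ->.
  rewrite /PP drop_enum_o /= ex.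
  exists a; first by rewrite eqxx inE.
  rewrite (pref_upd _ _ (erefl (val x))).
  apply/qeval_fix_eq.
    by apply/negP => /mem_drop_enum; rewrite ltnn.
  apply: PP_eq P' => y; rewrite ltnS leq_eqVlt => /orP[/eqP yx|yx].
    have -> : y = x by apply: val_inj.
    by rewrite ffunE eqxx t'x.
  rewrite ffunE neq_lt // -agr' // agr1 //.
have Hk : k < x by rewrite -km addnS ltnS leq_addr.
have Hkn : k < n by exact: ltn_trans Hk (ltn_ord x).
move: (G k (leqnn k)); rewrite /PP (drop_enum Hkn) /=.
set o := Ordinal Hkn; have ok : val o = k by [].
have ox : (o == x) = false by apply: neq_lt.
rewrite ox.
have G' : forall d, d \in qdom phi o -> PP phi k.+1 (tset t o d) ->
    forall j, j <= k.+1 -> PP phi j (tset t o d).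
  move=> d Hd H j; rewrite leq_eqVlt => /orP[/eqP -> //|jk].
  apply: (PP_eq (t := t)); last exact: G.
  by move=> y yj; rewrite ffunE neq_lt //; exact: leq_trans yj jk.
case: ifP => eo.
  move=> [d Hd]; rewrite (pref_upd _ _ ok) => H.
  exists d => //; rewrite (pref_upd _ _ ok).
  apply: (IH k.+1); [by rewrite addSnnS | exact: in_prod_tset | exact: G'].
move=> H d Hd; rewrite (pref_upd _ _ ok).
have := H d Hd; rewrite (pref_upd _ _ ok) => H'.
apply: (IH k.+1); [by rewrite addSnnS | exact: in_prod_tset | exact: G'].
Qed.

Lemma fal (z : 'I_n) : qex phi z -> qdom phi z = set0 ->
  (forall y : 'I_n, y < z -> exists d, d \in qdom phi y) ->
  forall m k q, k + m = z -> ~ qeval phi (drop k (enum 'I_n)) q.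
Proof.
move=> ez dz Hne; elim=> [|m IH] k q km.
  rewrite addn0 in km; subst k; rewrite drop_enum_o /= ez dz.
  by move=> [d]; rewrite inE.
have Hk : k < z by rewrite -km addnS ltnS leq_addr.
have Hkn : k < n by exact: ltn_trans Hk (ltn_ord z).
rewrite (drop_enum Hkn) /=; case: ifP => _.
  by move=> [d _]; apply: IH; rewrite addSnnS.
have [d Hd] := Hne (Ordinal Hkn) Hk.
by move/(_ d Hd); apply: IH; rewrite addSnnS.
Qed.

Lemma vac (z : 'I_n) : ~~ qex phi z -> qdom phi z = set0 ->
  (forall y : 'I_n, y < z -> exists d, d \in qdom phi y) ->
  forall m k q, k + m = z -> qeval (fix_dom phi x a) (drop k (enum 'I_n)) q.
Proof.
move=> ez dz Hne; elim=> [|m IH] k q km.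
  rewrite addn0 in km; subst k; rewrite drop_enum_o /= (negbTE ez).
  have -> : (z == x) = false by apply: contraNF ez => /eqP ->.
  by move=> d; rewrite dz inE.
have Hk : k < z by rewrite -km addnS ltnS leq_addr.
have Hkn : k < n by exact: ltn_trans Hk (ltn_ord z).
rewrite (drop_enum Hkn) /=; case: ifP => _; last first.
  by move=> d _; apply: IH; rewrite addSnnS.
case: eqVneq => _.
  by exists a; [rewrite inE | apply: IH; rewrite addSnnS].
have [d Hd] := Hne (Ordinal Hkn) Hk.
by exists d => //; apply: IH; rewrite addSnnS.
Qed.

End Main.

Theorem proposition7 (D : finType) (n : nat) (phi : qcsp D n) (x : 'I_n) (a : D) :
  qex phi x -> a \in qdom phi x -> s_fixable phi x a ->
  (qtrue phi <-> qtrue (fix_dom phi x a)).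
Proof.
move=> ex ax fx; split; last by move=> H; exact: qeval_fix_mono ex ax H.
move=> Htrue.
case: (boolP [forall y, qdom phi y != set0]) => [/forallP Hall|].
  pose t0 : {ffun 'I_n -> D} := [ffun y => odflt a [pick d in qdom phi y]].
  have Ht0 : in_prod phi t0.
    move=> y; rewrite ffunE; case: pickP => //= H.
    by have [d Hd] := set0Pn _ (Hall y); move: (H d); rewrite Hd.
  have G : forall j, j <= 0 -> PP phi j t0.
    by move=> j; rewrite leqn0 => /eqP ->; rewrite /PP drop0 pref_0.
  have := main_k ex fx Htrue (add0n _) Ht0 G.
  by rewrite /PP drop0 pref_0.
move/forallPn => [y0]; rewrite negbK => Hy0.
case: (@arg_minnP _ y0 (fun y => qdom phi y == set0) val Hy0) => z /eqP dz zmin.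
have Hne : forall y : 'I_n, y < z -> exists d, d \in qdom phi y.
  move=> y yz; case: (set0Pn (qdom phi y)) => [[d Hd]|H]; first by exists d.
  have := zmin y; rewrite eqEsubset sub0set andbT.
  have -> : qdom phi y \subset set0.
    by apply/subsetP => d Hd; exfalso; apply: H; exists d.
  by move/(_ isT); rewrite leqNgt yz.
case ez: (qex phi z).
  exfalso; apply: (fal ez dz Hne (m := z) (k := 0) (q := fun _ => None)) => //.
  by rewrite drop0.
rewrite /qtrue -(drop0 (enum 'I_n)).
by apply: (vac a ex (negbT ez) dz Hne (m := z)).
Qed.
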